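(* Let $H$ be a finite-dimensional Hopf algebra over a field $\Bbbk$. Suppose $|G(H^* )|\neq1$, $G(H^* )\cap Z(H^* )=\{1\}$, $G(H)\cap Z(H)=\{1\}$, and there exists an odd prime $p$ dividing $|G(H^* )|$ such that $\alpha(g)\neq1$ for every $g\in G(H)$ of order $p$ and every $\alpha\in G(H^* )$ of order $p$. Then $H$ admits no universal $R$-matrix, i.e. there is no $R$ making $(H,R)$ quasitriangular.
   Context: A universal $R$-matrix for $H$ is an invertible $R\in H\otimes H$ with $(\Delta\otimes\mathrm{id})(R)=R_{13}R_{23}$, $(\mathrm{id}\otimes\Delta)(R)=R_{13}R_{12}$, $\tau\Delta(h)=R\Delta(h)R^{-1}$ for all $h$. $G(B)$ denotes the group of group-like elements of a Hopf algebra $B$ and $Z(B)$ its center; $H^*$ is the dual Hopf algebra. *)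

(* Defs.v *)
(* A finite-dimensional Hopf algebra over a field k is
   presented by structure constants with respect to a basis e_0..e_{n-1}. *)
From mathcomp Require Import all_boot all_order all_algebra.
Set Implicit Arguments. Unset Strict Implicit. Unset Printing Implicit Defensive.
Import GRing.Theory.
Local Open Scope ring_scope.

Section HopfDefs.
Variables (k : fieldType) (n : nat).

(* Elements of H are coordinate row vectors w.r.t. the basis e_i. *)
Record hopf_data := HopfData {
  hmu : 'I_n -> 'I_n -> 'rV[k]_n;
  hone : 'rV[k]_n;
  hdelta : 'I_n -> 'I_n -> 'I_n -> k;    (* Delta(e_i) = sum_{a,b} hdelta i a b e_a (x) e_b *)
  heps : 'I_n -> k;
  hS : 'I_n -> 'rV[k]_n
}.

Definition bvec (i : 'I_n) : 'rV[k]_n := delta_mx 0 i.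

(* tensors in H(x)H and H(x)H(x)H, by coefficients in the product basis *)
Definition tensor2 := 'I_n -> 'I_n -> k.
Definition tensor3 := 'I_n -> 'I_n -> 'I_n -> k.
Definition teq2 (T U : tensor2) := forall a b, T a b = U a b.
Definition teq3 (T U : tensor3) := forall a b c, T a b c = U a b c.
Definition tpure2 (x y : 'rV[k]_n) : tensor2 := fun a b => x 0 a * y 0 b.

Section Ops.
Variable H : hopf_data.

Definition hmul (x y : 'rV[k]_n) : 'rV[k]_n :=
  \sum_i \sum_j (x 0 i * y 0 j) *: hmu H i j.
Definition hDelta (x : 'rV[k]_n) : tensor2 :=
  fun a b => \sum_i x 0 i * hdelta H i a b.
Definition hcounit (x : 'rV[k]_n) : k := \sum_i x 0 i * heps H i.
Definition hanti (x : 'rV[k]_n) : 'rV[k]_n := \sum_i x 0 i *: hS H i.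

Definition tmul2 (T U : tensor2) : tensor2 := fun a b =>
  \sum_i \sum_j \sum_i' \sum_j'
     T i j * U i' j' * (hmu H i i' 0 a * hmu H j j' 0 b).
Definition tmul3 (T U : tensor3) : tensor3 := fun a b c =>
  \sum_i \sum_j \sum_l \sum_i' \sum_j' \sum_l'
     T i j l * U i' j' l' * (hmu H i i' 0 a * hmu H j j' 0 b * hmu H l l' 0 c).

Definition is_hopf : Prop :=
  (forall x y z, hmul (hmul x y) z = hmul x (hmul y z)) /\
  (forall x, hmul (hone H) x = x /\ hmul x (hone H) = x) /\
  (forall i a b c, \sum_j hdelta H i j c * hdelta H j a b
                   = \sum_l hdelta H i a l * hdelta H l b c) /\
  (forall i b, \sum_j heps H j * hdelta H i j b = (i == b)%:R) /\
  (forall i a, \sum_l hdelta H i a l * heps H l = (i == a)%:R) /\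
  (forall x y, teq2 (hDelta (hmul x y)) (tmul2 (hDelta x) (hDelta y))) /\
  teq2 (hDelta (hone H)) (tpure2 (hone H) (hone H)) /\
  (forall x y, hcounit (hmul x y) = hcounit x * hcounit y) /\
  hcounit (hone H) = 1 /\
  (forall x, \sum_a \sum_b hDelta x a b *: hmul (hanti (bvec a)) (bvec b)
             = hcounit x *: hone H) /\
  (forall x, \sum_a \sum_b hDelta x a b *: hmul (bvec a) (hanti (bvec b))
             = hcounit x *: hone H).

Definition grouplike (g : 'rV[k]_n) : Prop :=
  g != 0 /\ teq2 (hDelta g) (tpure2 g g).
Definition central (g : 'rV[k]_n) : Prop := forall x, hmul g x = hmul x g.
Definition hpow (g : 'rV[k]_n) (m : nat) : 'rV[k]_n := iter m (hmul g) (hone H).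
Definition has_order (g : 'rV[k]_n) (m : nat) : Prop :=
  (0 < m)%N /\ hpow g m = hone H /\
  (forall j, (0 < j)%N -> (j < m)%N -> hpow g j != hone H).
Definition dvd_card_grouplike (p : nat) : Prop :=
  exists s : seq 'rV[k]_n, uniq s /\ (forall x, x \in s <-> grouplike x) /\ (p %| size s)%N.

Definition is_universal_R (R : tensor2) : Prop :=
  exists Rinv : tensor2,
    teq2 (tmul2 R Rinv) (tpure2 (hone H) (hone H)) /\
    teq2 (tmul2 Rinv R) (tpure2 (hone H) (hone H)) /\
    teq3 (fun a b c => \sum_i R i c * hdelta H i a b)
         (tmul3 (fun a b c => R a c * hone H 0 b) (fun a b c => hone H 0 a * R b c)) /\
    teq3 (fun a b c => \sum_j R a j * hdelta H j b c)
         (tmul3 (fun a b c => R a c * hone H 0 b) (fun a b c => R a b * hone H 0 c)) /\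
    (forall x, teq2 (fun a b => hDelta x b a) (tmul2 (tmul2 R (hDelta x)) Rinv)).

End Ops.

(* The dual Hopf algebra H^*, w.r.t. the dual basis e^i. *)
Definition hdual (H : hopf_data) : hopf_data :=
  HopfData (fun i j => \row_a hdelta H a i j)
           (\row_a heps H a)
           (fun i j l => hmu H j l 0 i)
           (fun i => hone H 0 i)
           (fun i => \row_a hS H a 0 i).

Definition hpair (alpha x : 'rV[k]_n) : k := \sum_i alpha 0 i * x 0 i.

End HopfDefs.

(* Main.v *)
Require Import Defs.
From mathcomp Require Import all_boot all_order all_algebra all_fingroup all_solvable ring.
From Stdlib Require Import Setoid Morphisms.
Set Implicit Arguments. Unset Strict Implicit. Unset Printing Implicit Defensive.
Import GRing.Theory.
Local Open Scope ring_scope.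

#[export] Instance bigop_proper (R I : Type) (idx : R) (r : seq I) :
  Proper (pointwise_relation I eq ==> eq) (@bigop R I idx r).
Proof. move=> f g fg; rewrite unlock /reducebig; elim: r => //= x r ->; by rewrite fg. Qed.
Ltac norm_sums := repeat (setoid_rewrite mulr_suml || setoid_rewrite mulr_sumr).

Section Basic.
Variables (k : fieldType) (n : nat).

Lemma sum_delta_l (i : 'I_n) (F : 'I_n -> k) : \sum_j (j == i)%:R * F j = F i.
Proof.
rewrite (bigD1 i) //= eqxx mul1r big1 ?addr0 // => j /negPf ->; by rewrite mul0r.
Qed.
Lemma sum_delta_r (i : 'I_n) (F : 'I_n -> k) : \sum_j F j * (j == i)%:R = F i.
Proof. rewrite -[RHS]sum_delta_l; apply: eq_bigr => j _; exact: mulrC. Qed.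
Lemma sum_delta_l' (i : 'I_n) (F : 'I_n -> k) : \sum_j (i == j)%:R * F j = F i.
Proof. rewrite -[RHS]sum_delta_l; apply: eq_bigr => j _; by rewrite eq_sym. Qed.
Lemma sum_delta_r' (i : 'I_n) (F : 'I_n -> k) : \sum_j F j * (i == j)%:R = F i.
Proof. rewrite -[RHS]sum_delta_l; apply: eq_bigr => j _; by rewrite eq_sym mulrC. Qed.

Lemma bvecE (i j : 'I_n) : bvec k i 0 j = (j == i)%:R.
Proof. by rewrite /bvec mxE eqxx. Qed.

Lemma row_eq (x y : 'rV[k]_n) : (forall j, x 0 j = y 0 j) -> x = y.
Proof. move=> e; apply/rowP => j; exact: e. Qed.

Variable H : hopf_data k n.

Lemma hmulE (x y : 'rV[k]_n) c :
  hmul H x y 0 c = \sum_i \sum_j x 0 i * y 0 j * hmu H i j 0 c.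
Proof.
rewrite /hmul summxE; apply: eq_bigr => i _; rewrite summxE; apply: eq_bigr => j _.
by rewrite mxE.
Qed.

Lemma hmul_bvec i j : hmul H (bvec k i) (bvec k j) = hmu H i j.
Proof.
apply: row_eq => c; rewrite hmulE.
rewrite (eq_bigr (fun a => (a == i)%:R * \sum_b (b == j)%:R * hmu H a b 0 c)).
  by rewrite sum_delta_l sum_delta_l.
move=> a _; rewrite mulr_sumr; apply: eq_bigr => b _; by rewrite !bvecE -mulrA.
Qed.
End Basic.

Section Pull.
Variable k : fieldType.
Variable I : finType.
Lemma pull1 (f : I -> k) (J : finType) (G : I -> J -> k) :
  \sum_a f a * \sum_i G a i = \sum_i \sum_a f a * G a i.
Proof. under eq_bigr do rewrite mulr_sumr; exact: exchange_big. Qed.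
Lemma pull2 (f : I -> k) (J1 J2 : finType) (G : I -> J1 -> J2 -> k) :
  \sum_a f a * \sum_i \sum_j G a i j = \sum_i \sum_j \sum_a f a * G a i j.
Proof. rewrite pull1; apply: eq_bigr => i _; exact: pull1. Qed.
Lemma pull3 (f : I -> k) (J1 J2 J3 : finType) (G : I -> J1 -> J2 -> J3 -> k) :
  \sum_a f a * \sum_i \sum_j \sum_l G a i j l = \sum_i \sum_j \sum_l \sum_a f a * G a i j l.
Proof. rewrite pull1; apply: eq_bigr => i _; exact: pull2. Qed.
Lemma pull4 (f : I -> k) (J1 J2 J3 J4 : finType) (G : I -> J1 -> J2 -> J3 -> J4 -> k) :
  \sum_a f a * \sum_i \sum_j \sum_l \sum_m G a i j l m =
  \sum_i \sum_j \sum_l \sum_m \sum_a f a * G a i j l m.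
Proof. rewrite pull1; apply: eq_bigr => i _; exact: pull3. Qed.
Lemma pull5 (f : I -> k) (J1 J2 J3 J4 J5 : finType) (G : I -> J1 -> J2 -> J3 -> J4 -> J5 -> k) :
  \sum_a f a * \sum_i \sum_j \sum_l \sum_m \sum_o G a i j l m o =
  \sum_i \sum_j \sum_l \sum_m \sum_o \sum_a f a * G a i j l m o.
Proof. rewrite pull1; apply: eq_bigr => i _; exact: pull4. Qed.
Lemma pull6 (f : I -> k) (J1 J2 J3 J4 J5 J6 : finType)
  (G : I -> J1 -> J2 -> J3 -> J4 -> J5 -> J6 -> k) :
  \sum_a f a * \sum_i \sum_j \sum_l \sum_m \sum_o \sum_q G a i j l m o q =
  \sum_i \sum_j \sum_l \sum_m \sum_o \sum_q \sum_a f a * G a i j l m o q.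
Proof. rewrite pull1; apply: eq_bigr => i _; exact: pull5. Qed.
Lemma mulsum (J : finType) (F : I -> k) (G : J -> k) :
  (\sum_i F i) * (\sum_j G j) = \sum_i \sum_j F i * G j.
Proof. rewrite mulr_suml; apply: eq_bigr => i _; by rewrite mulr_sumr. Qed.
Lemma mulsum3 (J : finType) (F : I -> k) (G : J -> k) x :
  (\sum_i F i) * (\sum_j G j) * x = \sum_i \sum_j F i * G j * x.
Proof. rewrite mulsum mulr_suml; apply: eq_bigr => i _; by rewrite mulr_suml. Qed.
Lemma sum_out2 (A B X : finType) (F : A -> B -> X -> k) :
  \sum_a \sum_b \sum_x F a b x = \sum_x \sum_a \sum_b F a b x.
Proof. under eq_bigr do rewrite exchange_big; exact: exchange_big. Qed.
Lemma sum_out3 (A B C X : finType) (F : A -> B -> C -> X -> k) :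
  \sum_a \sum_b \sum_c \sum_x F a b c x = \sum_x \sum_a \sum_b \sum_c F a b c x.
Proof. under eq_bigr do rewrite sum_out2; exact: exchange_big. Qed.
Lemma sum_out4 (A B C D X : finType) (F : A -> B -> C -> D -> X -> k) :
  \sum_a \sum_b \sum_c \sum_d \sum_x F a b c d x =
  \sum_x \sum_a \sum_b \sum_c \sum_d F a b c d x.
Proof. under eq_bigr do rewrite sum_out3; exact: exchange_big. Qed.
End Pull.

Section Mult.
Variables (k : fieldType) (n : nat) (H : hopf_data k n).
Definition Pf (b : 'rV[k]_n) (T : tensor2 k n) : 'rV[k]_n := \row_j \sum_i b 0 i * T i j.
Definition Qf (b : 'rV[k]_n) (T : tensor2 k n) : 'rV[k]_n := \row_i \sum_j T i j * b 0 j.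
Definition mult (b : 'rV[k]_n) := forall i j, \sum_a b 0 a * hmu H i j 0 a = b 0 i * b 0 j.

Lemma M1 b T U : mult b -> Pf b (tmul2 H T U) = hmul H (Pf b T) (Pf b U).
Proof.
move=> mb; apply: row_eq => c; rewrite mxE hmulE /tmul2 pull4.
under [RHS]eq_bigr => j _ do under eq_bigr => j' _ do rewrite !mxE mulsum3.
under [RHS]eq_bigr => j _ do rewrite exchange_big.
rewrite [RHS]exchange_big.
under [RHS]eq_bigr => i _ do under eq_bigr => j _ do rewrite exchange_big.
apply: eq_bigr => i _; apply: eq_bigr => j _; apply: eq_bigr => i' _; apply: eq_bigr => j' _.
rewrite (eq_bigr (fun a => b 0 a * hmu H i i' 0 a * (T i j * U i' j' * hmu H j j' 0 c))).
  by rewrite -mulr_suml mb; ring.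
by move=> a _; ring.
Qed.

Lemma M2 b T U : mult b -> Qf b (tmul2 H T U) = hmul H (Qf b T) (Qf b U).
Proof.
move=> mb; apply: row_eq => c; rewrite mxE hmulE /tmul2.
under eq_bigr do rewrite mulrC; rewrite pull4.
under [RHS]eq_bigr => j _ do under eq_bigr => j' _ do rewrite !mxE mulsum3.
under [RHS]eq_bigr => j _ do rewrite exchange_big.
apply: eq_bigr => i _; apply: eq_bigr => j _; apply: eq_bigr => i' _; apply: eq_bigr => j' _.
rewrite (eq_bigr (fun a => b 0 a * hmu H j j' 0 a * (T i j * U i' j' * hmu H i i' 0 c))).
  by rewrite -mulr_suml mb; ring.
by move=> a _; ring.
Qed.

Lemma ev_mult b x y : mult b -> hpair b (hmul H x y) = hpair b x * hpair b y.
Proof.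
move=> mb; rewrite /hpair mulsum.
under eq_bigr do rewrite hmulE; rewrite pull2.
apply: eq_bigr => i _; apply: eq_bigr => j _.
rewrite (eq_bigr (fun a => b 0 a * hmu H i j 0 a * (x 0 i * y 0 j))).
  by rewrite -mulr_suml mb; ring.
by move=> a _; ring.
Qed.

Definition P1 (b : 'rV[k]_n) (T : tensor3 k n) : tensor2 k n :=
  fun j l => \sum_i b 0 i * T i j l.
Definition P3 (b : 'rV[k]_n) (T : tensor3 k n) : tensor2 k n :=
  fun i j => \sum_l T i j l * b 0 l.

Lemma M5 b T U j l : mult b ->
  \sum_a b 0 a * tmul3 H T U a j l = tmul2 H (P1 b T) (P1 b U) j l.
Proof.
move=> mb; rewrite /tmul3 /tmul2 pull6.
under [RHS]eq_bigr => j1 _ do under eq_bigr => j2 _ do under eq_bigr => j3 _ do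
  under eq_bigr => j4 _ do rewrite mulsum3.
rewrite [RHS]sum_out4.
under [RHS]eq_bigr => i _ do under eq_bigr => j1 _ do under eq_bigr => j2 _ do rewrite sum_out2.
apply: eq_bigr => i _; apply: eq_bigr => j1 _; apply: eq_bigr => j2 _.
apply: eq_bigr => i' _; apply: eq_bigr => j1' _; apply: eq_bigr => j2' _.
rewrite (eq_bigr (fun a => b 0 a * hmu H i i' 0 a * (T i j1 j2 * U i' j1' j2' *
   (hmu H j1 j1' 0 j * hmu H j2 j2' 0 l)))).
  by rewrite -mulr_suml mb; ring.
by move=> a _; ring.
Qed.

Lemma M6 b T U i j : mult b ->
  \sum_c tmul3 H T U i j c * b 0 c = tmul2 H (P3 b T) (P3 b U) i j.
Proof.
move=> mb; rewrite /tmul3 /tmul2.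
under eq_bigr do rewrite mulrC; rewrite pull6.
under [RHS]eq_bigr => j1 _ do under eq_bigr => j2 _ do under eq_bigr => j3 _ do
  under eq_bigr => j4 _ do rewrite mulsum3.
under [RHS]eq_bigr => i1 _ do under eq_bigr => j1 _ do rewrite sum_out2.
apply: eq_bigr => i1 _; apply: eq_bigr => j1 _; apply: eq_bigr => l _.
apply: eq_bigr => i' _; apply: eq_bigr => j1' _; apply: eq_bigr => l' _.
rewrite (eq_bigr (fun a => b 0 a * hmu H l l' 0 a * (T i1 j1 l * U i' j1' l' *
   (hmu H i1 i' 0 i * hmu H j1 j1' 0 j)))).
  by rewrite -mulr_suml mb; ring.
by move=> a _; ring.
Qed.
End Mult.


Section Hopf.
Variables (k : fieldType) (n : nat) (H : hopf_data k n).
Hypothesis hH : is_hopf H.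
Implicit Types (x y : 'rV[k]_n).
Local Notation one := (hone H).
Local Notation d := (hdelta H).
Local Notation eps := (hone (hdual H)).
Local Notation conv := (hmul (hdual H)).

Ltac hh := have [hA [hU [hC [hCL [hCR [hDM [hD1 [hEM [hE1 [hSL hSR]]]]]]]]]] := hH.

Lemma h_assoc x y z : hmul H (hmul H x y) z = hmul H x (hmul H y z).
Proof. by hh. Qed.
Lemma h_mul1 x : hmul H one x = x. Proof. by hh; case: (hU x). Qed.
Lemma h_mulr1 x : hmul H x one = x. Proof. by hh; case: (hU x). Qed.
Lemma h_coassoc i a b c : \sum_j d i j c * d j a b = \sum_l d i a l * d l b c.
Proof. by hh. Qed.
Lemma h_counitL i b : \sum_j heps H j * d i j b = (i == b)%:R. Proof. by hh. Qed.
Lemma h_counitR i a : \sum_l d i a l * heps H l = (i == a)%:R. Proof. by hh. Qed.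
Lemma h_DM x y : teq2 (hDelta H (hmul H x y)) (tmul2 H (hDelta H x) (hDelta H y)).
Proof. by hh. Qed.
Lemma h_D1 : teq2 (hDelta H one) (tpure2 one one). Proof. by hh. Qed.

Lemma hDelta_bvec c a b : hDelta H (bvec k c) a b = d c a b.
Proof. rewrite /hDelta; under eq_bigr do rewrite bvecE; exact: sum_delta_l. Qed.

Lemma convE b g a : conv b g 0 a = \sum_i \sum_j b 0 i * g 0 j * d a i j.
Proof. rewrite hmulE; apply: eq_bigr => i _; apply: eq_bigr => j _; by rewrite mxE. Qed.

Lemma epsE a : eps 0 a = heps H a. Proof. by rewrite mxE. Qed.

Lemma hmul0 x : hmul H 0 x = 0.
Proof. apply/rowP => c; rewrite hmulE mxE big1 // => i _; rewrite big1 // => j _; by rewrite mxE !mul0r. Qed.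

Lemma mult_eps : mult H eps.
Proof.
hh; move=> i j; have := hEM (bvec k i) (bvec k j); rewrite hmul_bvec /hcounit !epsE.
move=> E.
under eq_bigr do rewrite epsE mulrC.
rewrite E; congr (_ * _); (under eq_bigr do rewrite bvecE); exact: sum_delta_l.
Qed.

Lemma pair_one_eps : hpair eps one = 1.
Proof. hh; rewrite -hE1 /hpair /hcounit; apply: eq_bigr => i _; by rewrite epsE mulrC. Qed.

Lemma conv_assoc b g e : conv (conv b g) e = conv b (conv g e).
Proof.
apply/rowP => a; rewrite !convE.
setoid_rewrite convE; norm_sums.
rewrite -[LHS]sum_out3 -[LHS]sum_out2.
under [RHS]eq_bigr => i _ do rewrite -sum_out2.
apply: eq_bigr => i _; apply: eq_bigr => j _; apply: eq_bigr => l _.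
rewrite (eq_bigr (fun p => b 0 i * g 0 j * e 0 l * (d a p l * d p i j))); last by move=> p _; ring.
rewrite -mulr_sumr h_coassoc mulr_sumr; apply: eq_bigr => q _; ring.
Qed.

Lemma conv_eps_l b : conv eps b = b.
Proof.
apply/rowP => a; rewrite convE exchange_big /=.
rewrite (eq_bigr (fun j => b 0 j * (a == j)%:R)); first by rewrite sum_delta_r'.
move=> j _; rewrite -(h_counitL a j) mulr_sumr; apply: eq_bigr => i _; rewrite epsE; ring.
Qed.
Lemma conv_eps_r b : conv b eps = b.
Proof.
apply/rowP => a; rewrite convE.
rewrite (eq_bigr (fun i => b 0 i * (a == i)%:R)); first by rewrite sum_delta_r'.
move=> i _; rewrite -(h_counitR a i) mulr_sumr; apply: eq_bigr => j _; rewrite epsE; ring.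
Qed.


Lemma hpair_sum (I : finType) (b : 'rV[k]_n) (v : I -> 'rV[k]_n) :
  hpair b (\sum_i v i) = \sum_i hpair b (v i).
Proof.
rewrite /hpair; under eq_bigr do rewrite summxE mulr_sumr; exact: exchange_big.
Qed.
Lemma hpair_scale b c (v : 'rV[k]_n) : hpair b (c *: v) = c * hpair b v.
Proof. rewrite /hpair mulr_sumr; apply: eq_bigr => i _; rewrite mxE; ring. Qed.
Lemma hpair_bvec (b : 'rV[k]_n) (i : 'I_n) : hpair b (bvec k i) = b 0 i.
Proof. rewrite /hpair; under eq_bigr do rewrite bvecE; exact: sum_delta_r. Qed.
Lemma hpair0 (b : 'rV[k]_n) : hpair b 0 = 0.
Proof. rewrite /hpair big1 // => i _; by rewrite mxE mulr0. Qed.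
Lemma hpair_0l x : hpair 0 x = 0.
Proof. rewrite /hpair big1 // => i _; by rewrite mxE mul0r. Qed.
Lemma pairPf (b g : 'rV[k]_n) (T : tensor2 k n) : hpair g (Pf b T) = \sum_j g 0 j * \sum_i b 0 i * T i j.
Proof. rewrite /hpair; apply: eq_bigr => j _; by rewrite mxE. Qed.

Lemma one_neq0 : one != 0.
Proof. apply/eqP => e; have := pair_one_eps; rewrite e hpair0 => /eqP; by rewrite eq_sym oner_eq0. Qed.

Definition gl (b : 'rV[k]_n) := mult H b /\ hpair b one = 1.

Lemma gl_neq0 (b : 'rV[k]_n) : gl b -> b != 0.
Proof. case=> _ e; apply/eqP => b0; move: e; rewrite b0 hpair_0l => /eqP; by rewrite eq_sym oner_eq0. Qed.

Lemma gl_grouplike b : gl b -> grouplike (hdual H) b.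
Proof.
move=> gb; split; first exact: gl_neq0.
move=> i j; rewrite /hDelta /tpure2 /=; case: gb => mb _; rewrite -mb.
apply: eq_bigr => a _; done.
Qed.

Lemma grouplike_gl b : grouplike (hdual H) b -> gl b.
Proof.
case=> nz te.
have mb : mult H b by move=> i j; have := te i j; rewrite /hDelta /tpure2 /= => <-.
split=> //.
case: (pickP (fun i => b 0 i != 0)) => [i bi | all0]; last first.
  exfalso; move/eqP: nz; apply; apply/rowP => i; have := all0 i; rewrite mxE /=.
  by move/negbFE/eqP.
have := ev_mult one (bvec k i) mb.
rewrite h_mul1 !hpair_bvec -{1}(mul1r (b 0 i)) => /(mulIf bi) e; by rewrite -e.
Qed.

Lemma gl_eps : gl eps.
Proof. split; [exact: mult_eps | exact: pair_one_eps]. Qed.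

Lemma conv_pair b g a : conv b g 0 a = \sum_j g 0 j * \sum_i b 0 i * hDelta H (bvec k a) i j.
Proof.
rewrite convE exchange_big; apply: eq_bigr => j _; rewrite mulr_sumr; apply: eq_bigr => i _.
rewrite hDelta_bvec; ring.
Qed.

Lemma gl_conv b g : gl b -> gl g -> gl (conv b g).
Proof.
move=> [mb pb] [mg pg]; split.
  move=> x y.
  transitivity (\sum_j g 0 j * \sum_i b 0 i * hDelta H (hmul H (bvec k x) (bvec k y)) i j).
    rewrite hmul_bvec; setoid_rewrite convE; rewrite /hDelta; norm_sums.
    rewrite -[LHS]sum_out2 [LHS]exchange_big.
    apply: eq_bigr => j _; apply: eq_bigr => i _; apply: eq_bigr => a _; ring.
  under eq_bigr do under eq_bigr do rewrite h_DM.
  by rewrite -pairPf M1 // ev_mult // !pairPf -!conv_pair.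
rewrite /hpair; setoid_rewrite conv_pair; setoid_rewrite hDelta_bvec; norm_sums.
transitivity (hpair b one * hpair g one); last by rewrite pb pg mulr1.
rewrite -[LHS]sum_out2 [LHS]exchange_big /hpair mulsum.
apply: eq_bigr => i _; apply: eq_bigr => j _.
have := h_D1 i j; rewrite /hDelta /tpure2 => e.
transitivity (g 0 j * b 0 i * \sum_a one 0 a * d a i j); last by rewrite e; ring.
rewrite mulr_sumr; apply: eq_bigr => a _; ring.
Qed.

Lemma hanti_bvec (a : 'I_n) : hanti H (bvec k a) = hS H a.
Proof.
apply/rowP => j; rewrite /hanti summxE.
under eq_bigr do rewrite mxE bvecE; exact: sum_delta_l.
Qed.

Definition ainv (b : 'rV[k]_n) : 'rV[k]_n := \row_a hpair b (hS H a).

Lemma ainvK b : gl b -> conv (ainv b) b = eps.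
Proof.
hh; move=> [mb pb]; apply/rowP => c.
have := congr1 (hpair b) (hSL (bvec k c)).
rewrite hpair_sum hpair_scale pb mulr1 epsE /hcounit.
under [X in _ = X -> _]eq_bigr do rewrite bvecE.
rewrite sum_delta_l => <-; rewrite convE; apply: eq_bigr => a _.
rewrite hpair_sum; apply: eq_bigr => j _.
by rewrite hpair_scale ev_mult // hanti_bvec hpair_bvec hDelta_bvec mxE; ring.
Qed.

End Hopf.


Section Tens.
Variables (k : fieldType) (n : nat) (H : hopf_data k n).
Lemma tmul2_ext (T T' U U' : tensor2 k n) a b :
  teq2 T T' -> teq2 U U' -> tmul2 H T U a b = tmul2 H T' U' a b.
Proof.
move=> e1 e2; rewrite /tmul2; do 4! (apply: eq_bigr => ? _); by rewrite e1 e2.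
Qed.
Lemma tmul2_pure (x y x' y' : 'rV[k]_n) a b :
  tmul2 H (tpure2 x y) (tpure2 x' y') a b = hmul H x x' 0 a * hmul H y y' 0 b.
Proof.
rewrite !hmulE mulsum /tmul2 /tpure2; norm_sums.
do 4! (apply: eq_bigr => ? _); ring.
Qed.
Lemma Pf_teq (b : 'rV[k]_n) T U : teq2 T U -> Pf b T = Pf b U.
Proof. move=> e; apply/rowP => j; rewrite !mxE; apply: eq_bigr => i _; by rewrite e. Qed.
Lemma Qf_teq (b : 'rV[k]_n) T U : teq2 T U -> Qf b T = Qf b U.
Proof. move=> e; apply/rowP => j; rewrite !mxE; apply: eq_bigr => i _; by rewrite e. Qed.
Lemma Pf_pure (b x y : 'rV[k]_n) : Pf b (tpure2 x y) = hpair b x *: y.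
Proof. apply/rowP => j; rewrite !mxE /hpair /tpure2 mulr_suml; apply: eq_bigr => i _; ring. Qed.
Lemma Qf_pure (b x y : 'rV[k]_n) : Qf b (tpure2 x y) = hpair b y *: x.
Proof. apply/rowP => j; rewrite !mxE /hpair /tpure2 mulr_suml; apply: eq_bigr => i _; ring. Qed.
End Tens.

Section RMat.
Variables (k : fieldType) (n : nat) (H : hopf_data k n).
Hypothesis hH : is_hopf H.
Variables (R Rinv : tensor2 k n).
Local Notation one := (hone H).
Local Notation d := (hdelta H).
Local Notation eps := (hone (hdual H)).
Local Notation conv := (hmul (hdual H)).
Hypothesis A1 : teq2 (tmul2 H R Rinv) (tpure2 one one).
Hypothesis A2 : teq2 (tmul2 H Rinv R) (tpure2 one one).
Hypothesis A3 : teq3 (fun a b c => \sum_i R i c * hdelta H i a b)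
         (tmul3 H (fun a b c => R a c * one 0 b) (fun a b c => one 0 a * R b c)).
Hypothesis A4 : teq3 (fun a b c => \sum_j R a j * hdelta H j b c)
         (tmul3 H (fun a b c => R a c * one 0 b) (fun a b c => R a b * one 0 c)).
Hypothesis A5 : forall x, teq2 (fun a b => hDelta H x b a) (tmul2 H (tmul2 H R (hDelta H x)) Rinv).

Definition gR (b : 'rV[k]_n) := Pf b R.
Definition gR' (b : 'rV[k]_n) := Pf b Rinv.
Definition hR (b : 'rV[k]_n) := Qf b R.
Definition hR' (b : 'rV[k]_n) := Qf b Rinv.
Definition Lt (b x : 'rV[k]_n) := Pf b (hDelta H x).
Definition Rt (b x : 'rV[k]_n) := Qf b (hDelta H x).

Lemma g_inv b : gl H b -> hmul H (gR b) (gR' b) = one /\ hmul H (gR' b) (gR b) = one.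
Proof.
case=> mb pb; split.
  by rewrite /gR /gR' -M1 // (Pf_teq _ A1) Pf_pure pb scale1r.
by rewrite /gR /gR' -M1 // (Pf_teq _ A2) Pf_pure pb scale1r.
Qed.
Lemma h_inv b : gl H b -> hmul H (hR b) (hR' b) = one /\ hmul H (hR' b) (hR b) = one.
Proof.
case=> mb pb; split.
  by rewrite /hR /hR' -M2 // (Qf_teq _ A1) Qf_pure pb scale1r.
by rewrite /hR /hR' -M2 // (Qf_teq _ A2) Qf_pure pb scale1r.
Qed.

Lemma rel_g b x : gl H b -> hmul H (Rt b x) (gR b) = hmul H (gR b) (Lt b x).
Proof.
move=> gb; have [mb _] := gb; have [_ e2] := g_inv gb.
have : Rt b x = hmul H (hmul H (gR b) (Lt b x)) (gR' b).
  rewrite /gR /Lt /gR' -!M1 // -(Pf_teq _ (A5 x)).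
  apply/rowP => j; rewrite !mxE; apply: eq_bigr => i _; exact: mulrC.
move=> ->; by rewrite h_assoc // e2 h_mulr1.
Qed.
Lemma rel_h b x : gl H b -> hmul H (Lt b x) (hR b) = hmul H (hR b) (Rt b x).
Proof.
move=> gb; have [mb _] := gb; have [_ e2] := h_inv gb.
have : Lt b x = hmul H (hmul H (hR b) (Rt b x)) (hR' b).
  rewrite /hR /Rt /hR' -!M2 // -(Qf_teq _ (A5 x)).
  apply/rowP => j; rewrite !mxE; apply: eq_bigr => i _; exact: mulrC.
move=> ->; by rewrite h_assoc // e2 h_mulr1.
Qed.


Lemma g_hom b g : gl H b -> gl H g -> gR (conv b g) = hmul H (gR b) (gR g).
Proof.
move=> [mb pb] [mg pg]; apply/rowP => c.
transitivity (\sum_j g 0 j * \sum_i b 0 i * (\sum_a R a c * d a i j)).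
  rewrite /gR mxE; setoid_rewrite convE; norm_sums.
  rewrite -[LHS]sum_out2 [LHS]exchange_big.
  do 3! (apply: eq_bigr => ? _); ring.
under eq_bigr do rewrite (eq_bigr _ (fun i _ => congr1 (fun t => b 0 i * t) (A3 i _ c))).
under eq_bigr do rewrite M5 //.
transitivity (Pf g (tmul2 H (P1 b (fun a b0 c0 => R a c0 * one 0 b0))
                            (P1 b (fun a b0 c0 => one 0 a * R b0 c0))) 0 c).
  by rewrite mxE.
rewrite M1 //; congr (hmul H _ _ 0 c); apply/rowP => l; rewrite !mxE /P1.
  rewrite -[RHS]mul1r -pg /hpair mulsum; apply: eq_bigr => j _; rewrite mulr_sumr.
  apply: eq_bigr => i _; ring.
rewrite -[RHS]mul1r -pb /hpair mulsum exchange_big; apply: eq_bigr => j _; rewrite mulr_sumr.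
apply: eq_bigr => i _; ring.
Qed.

Lemma g_delta b : gl H b -> teq2 (hDelta H (gR b)) (tpure2 (gR b) (gR b)).
Proof.
move=> [mb pb] j l.
transitivity (\sum_a b 0 a * tmul3 H (fun a b0 c => R a c * one 0 b0)
                (fun a b0 c => R a b0 * one 0 c) a j l).
  rewrite -(eq_bigr _ (fun a _ => congr1 (fun t => b 0 a * t) (A4 a j l))).
  rewrite /hDelta /gR /Pf; under [LHS]eq_bigr => i _ do rewrite mxE; norm_sums.
  rewrite [LHS]exchange_big; do 2! (apply: eq_bigr => ? _); ring.
rewrite M5 // (@tmul2_ext _ _ _ _ (tpure2 one (gR b)) _ (tpure2 (gR b) one)).
- by rewrite tmul2_pure h_mul1 // h_mulr1.
- by move=> x y; rewrite /P1 /tpure2 /gR /Pf mxE mulr_sumr; apply: eq_bigr => i _; ring.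
- by move=> x y; rewrite /P1 /tpure2 /gR /Pf mxE mulr_suml; apply: eq_bigr => i _; ring.
Qed.

Lemma h_delta b : gl H b -> teq2 (hDelta H (hR b)) (tpure2 (hR b) (hR b)).
Proof.
move=> [mb pb] j l.
transitivity (\sum_c tmul3 H (fun a b0 c => R a c * one 0 b0)
                (fun a b0 c => one 0 a * R b0 c) j l c * b 0 c).
  rewrite -(eq_bigr _ (fun c _ => congr1 (fun t => t * b 0 c) (A3 j l c))).
  rewrite /hDelta /hR /Qf; under [LHS]eq_bigr => i _ do rewrite mxE; norm_sums.
  rewrite [LHS]exchange_big; do 2! (apply: eq_bigr => ? _); ring.
rewrite M6 // (@tmul2_ext _ _ _ _ (tpure2 (hR b) one) _ (tpure2 one (hR b))).
- by rewrite tmul2_pure h_mul1 // h_mulr1.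
- by move=> x y; rewrite /P3 /tpure2 /hR /Qf mxE mulr_suml; apply: eq_bigr => i _; ring.
- by move=> x y; rewrite /P3 /tpure2 /hR /Qf mxE mulr_sumr; apply: eq_bigr => i _; ring.
Qed.

Lemma Lt_eps x : Lt eps x = x.
Proof.
apply/rowP => j; rewrite /Lt /hDelta mxE; setoid_rewrite epsE; norm_sums.
rewrite exchange_big /=; rewrite -[RHS]sum_delta_r'; apply: eq_bigr => i _.
rewrite eq_sym -(h_counitL hH i j) mulr_sumr; apply: eq_bigr => a _; ring.
Qed.
Lemma Rt_eps x : Rt eps x = x.
Proof.
apply/rowP => j; rewrite /Rt /hDelta mxE; setoid_rewrite epsE; norm_sums.
rewrite exchange_big /=; rewrite -[RHS]sum_delta_r'; apply: eq_bigr => i _.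
rewrite eq_sym -(h_counitR hH i j) mulr_sumr; apply: eq_bigr => a _; ring.
Qed.

Lemma RtRt b g x : Rt b (Rt g x) = Rt (conv b g) x.
Proof.
apply/rowP => a; rewrite /Rt /hDelta !mxE.
rewrite /Qf; under [LHS]eq_bigr => j _ do under eq_bigr => i _ do rewrite mxE.
setoid_rewrite convE; norm_sums.
rewrite [LHS]sum_out3; under [LHS]eq_bigr => i0 _ do under eq_bigr => j _ do rewrite exchange_big.
rewrite -[RHS]sum_out3.
apply: eq_bigr => i0 _; apply: eq_bigr => j _; apply: eq_bigr => c _.
transitivity (x 0 i0 * g 0 c * b 0 j * \sum_i d i0 i c * d i a j).
  rewrite mulr_sumr; apply: eq_bigr => i _; ring.
rewrite h_coassoc // mulr_sumr; apply: eq_bigr => l _; ring.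
Qed.

Lemma central_of b : (forall x, Lt b x = Rt b x) -> central (hdual H) b.
Proof.
move=> e y; apply/rowP => a; rewrite !convE.
have ea : forall j, Lt b (bvec k a) 0 j = Rt b (bvec k a) 0 j by move=> j; rewrite e.
transitivity (\sum_j y 0 j * Lt b (bvec k a) 0 j).
  rewrite exchange_big; apply: eq_bigr => j _; rewrite /Lt /Pf mxE mulr_sumr.
  apply: eq_bigr => i _; rewrite hDelta_bvec; ring.
under eq_bigr do rewrite ea; apply: eq_bigr => j _; rewrite /Rt /Qf mxE mulr_sumr.
apply: eq_bigr => i _; rewrite hDelta_bvec; ring.
Qed.

End RMat.


Section Part2.
Variables (k : fieldType) (n : nat) (H : hopf_data k n).
Hypothesis hH : is_hopf H.
Local Notation one := (hone H).
Local Notation d := (hdelta H).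
Local Notation eps := (hone (hdual H)).
Local Notation conv := (hmul (hdual H)).
Hypothesis Hcen : forall g, grouplike H g -> central H g -> g = one.
Hypothesis HcenD : forall a, grouplike (hdual H) a -> central (hdual H) a -> a = eps.
Variables (R Rinv : tensor2 k n).
Hypothesis A1 : teq2 (tmul2 H R Rinv) (tpure2 one one).
Hypothesis A2 : teq2 (tmul2 H Rinv R) (tpure2 one one).
Hypothesis A3 : teq3 (fun a b c => \sum_i R i c * hdelta H i a b)
         (tmul3 H (fun a b c => R a c * one 0 b) (fun a b c => one 0 a * R b c)).
Hypothesis A4 : teq3 (fun a b c => \sum_j R a j * hdelta H j b c)
         (tmul3 H (fun a b c => R a c * one 0 b) (fun a b c => R a b * one 0 c)).
Hypothesis A5 : forall x, teq2 (fun a b => hDelta H x b a) (tmul2 H (tmul2 H R (hDelta H x)) Rinv).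

Local Notation gR := (gR R).
Local Notation hR := (hR R).
Local Notation Lt := (Lt H).
Local Notation Rt := (Rt H).

Lemma nz_of_inv x y : hmul H x y = one -> x != 0.
Proof. move=> e; apply/eqP => x0; move: e; rewrite x0 hmul0 => e; by move: (one_neq0 hH); rewrite -e eqxx. Qed.

Lemma gl_pow a j : gl H a -> gl H (hpow (hdual H) a j).
Proof. move=> ga; elim: j => [|j IH] /=; [exact: gl_eps | exact: gl_conv]. Qed.

Lemma g_eps : gR eps = one.
Proof.
apply: Hcen; last by move=> x; have := rel_g hH A1 A2 A5 x (gl_eps hH); rewrite Lt_eps // Rt_eps.
split; last first. have := g_delta hH A4 (gl_eps hH). exact.
by have [e _] := g_inv A1 A2 (gl_eps hH); exact: nz_of_inv e.
Qed.

Lemma g_pow a j : gl H a -> hpow H (gR a) j.+1 = gR (hpow (hdual H) a j.+1).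
Proof.
move=> ga; elim: j => [|j IH].
  by rewrite /= conv_eps_r // h_mulr1.
change (hmul H (gR a) (hpow H (gR a) j.+1) = gR (conv a (hpow (hdual H) a j.+1))).
rewrite IH.
by rewrite (g_hom A3) //; apply: gl_pow.
Qed.


Lemma pair_pow a x j : mult H a -> hpair a one = 1 ->
  hpair a (hpow H x j) = hpair a x ^+ j.
Proof.
move=> ma pa; elim: j => [|j IH] /=; first by rewrite pa expr0.
by rewrite ev_mult // IH exprS.
Qed.

Lemma part2 p a : prime p -> odd p -> grouplike (hdual H) a -> has_order (hdual H) a p ->
  grouplike H (gR a) /\ has_order H (gR a) p /\ hpair a (gR a) = 1.
Proof.
move=> pp po ga [p0 [ap aj]].
have gla := grouplike_gl hH ga.
have [ginv1 ginv2] := g_inv A1 A2 gla.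
have gg : grouplike H (gR a) by split; [exact: nz_of_inv ginv1 | exact (g_delta hH A4 gla)].
have [p' ep] : exists p', p = p'.+1 by exists p.-1; rewrite prednK // prime_gt0.
have gpp : hpow H (gR a) p = one by rewrite ep g_pow // -ep ap g_eps.
split=> //; split.
  split=> //; split=> // j j0 jp; apply/eqP => e.
  have [j' ej] : exists j', j = j'.+1 by exists j.-1; rewrite prednK.
  move: e; rewrite ej g_pow // => e.
  have glb : gl H (hpow (hdual H) a j'.+1) := gl_pow j'.+1 gla.
  have : hpow (hdual H) a j'.+1 = eps.
    apply: HcenD; first exact: gl_grouplike.
    apply: central_of => x; have := rel_g hH A1 A2 A5 x glb.
    by rewrite e h_mul1 // h_mulr1 // => ->.
  by apply/eqP; rewrite -ej; apply: aj.
set g := gR a; set h := hR a.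
have [hinv1 hinv2] := h_inv A1 A2 gla.
have Rsurj : forall y, exists z, y = Rt a z.
  move=> y; exists (Rt (hpow (hdual H) a p') y); rewrite RtRt //.
  have -> : conv a (hpow (hdual H) a p') = eps by rewrite -ap ep.
  by rewrite Rt_eps.
have gh_c : central H (hmul H g h).
  move=> y; have [z ->] := Rsurj y.
  rewrite h_assoc // -(rel_h hH A1 A2 A5 z gla) -h_assoc // -(rel_g hH A1 A2 A5 z gla).
  by rewrite h_assoc.
have gh_g : grouplike H (hmul H g h).
  split.
    apply: (@nz_of_inv _ (hmul H (hR' Rinv a) (gR' Rinv a))).
    rewrite !h_assoc // -[hmul H h (hmul H _ _)]h_assoc // hinv1 h_mul1 //.
  move=> i j; rewrite (h_DM hH) (@tmul2_ext _ _ H _ _ _ _ i j (g_delta hH A4 gla) (h_delta hH A3 gla)).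
  by rewrite tmul2_pure.
have ghe : hmul H g h = one := Hcen gh_g gh_c.
have [ma pa] := gla.
have t2 : hpair a g * hpair a h = 1 by rewrite -(@ev_mult _ _ H) // ghe.
have hg : hpair a h = hpair a g.
  rewrite /h /g /hR /gR /Qf /Pf /hpair; under eq_bigr do rewrite mxE mulr_sumr.
  rewrite exchange_big; apply: eq_bigr => j _; rewrite mxE mulr_sumr; apply: eq_bigr => i _; ring.
have tp : hpair a g ^+ p = 1 by rewrite -pair_pow // gpp.
have t22 : hpair a g ^+ 2 = 1 by rewrite expr2 -{2}hg.
move: tp; rewrite -(odd_double_half p) po -mul2n exprD exprM t22 expr1n mulr1 expr1.
done.
Qed.

End Part2.


Section Part1.
Variables (k : fieldType) (n : nat) (H : hopf_data k n).
Hypothesis hH : is_hopf H.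
Local Notation eps := (hone (hdual H)).
Local Notation conv := (hmul (hdual H)).
Variable s : seq 'rV[k]_n.
Hypothesis us : uniq s.
Hypothesis hs : forall x, x \in s <-> grouplike (hdual H) x.

Local Notation T := (seq_sub s).

Lemma gl_T (t : T) : gl H (val t).
Proof. exact (grouplike_gl hH ((hs _).1 (ssvalP t))). Qed.
Lemma conv_in (a t : T) : conv (val a) (val t) \in s.
Proof. apply/hs; apply: gl_grouplike; apply: gl_conv => //; exact: gl_T. Qed.

Definition fm (a t : T) : T := insubd t (conv (val a) (val t)).
Lemma fmE a t : val (fm a t) = conv (val a) (val t).
Proof. exact: insubdK (conv_in a t). Qed.

Lemma fm_inj a : injective (fm a).
Proof.
move=> t1 t2 e; apply: val_inj; have := congr1 val e; rewrite !fmE => e'.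
rewrite -[val t1](conv_eps_l hH) -(ainvK hH (gl_T a)) conv_assoc // e'.
by rewrite -conv_assoc // ainvK ?conv_eps_l //; exact: gl_T.
Qed.

Definition phi a : {perm T} := perm (@fm_inj a).

Lemma eps_in : eps \in s.
Proof. apply/hs; apply: gl_grouplike; exact: gl_eps. Qed.
Definition e0 : T := SeqSub eps_in.

Lemma Ggrp : group_set [set phi a | a : T].
Proof.
apply/group_setP; split.
  apply/imsetP; exists e0 => //; apply/permP => t; rewrite perm1 permE; apply: val_inj.
  by rewrite fmE /= conv_eps_l.
move=> x y /imsetP[a _ ->] /imsetP[b _ ->]; apply/imsetP; exists (fm b a) => //.
apply/permP => t; rewrite permM !permE; apply: val_inj; by rewrite !fmE conv_assoc.
Qed.

Lemma phi_inj : injective phi.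
Proof.
move=> a b e; have := congr1 (fun f : {perm T} => val (f e0)) e; rewrite /= !permE !fmE /=.
by rewrite !conv_eps_r // => /val_inj.
Qed.

Lemma phi_pow a j t : val ((phi a ^+ j)%g t) = conv (hpow (hdual H) (val a) j) (val t).
Proof.
elim: j t => [|j IH] t; first by rewrite expg0 perm1 /= conv_eps_l.
by rewrite expgSr permM permE fmE IH /= conv_assoc.
Qed.

Lemma part1 p : prime p -> (p %| size s)%N ->
  exists a, grouplike (hdual H) a /\ has_order (hdual H) a p.
Proof.
move=> pp pd.
have cG : #|Group Ggrp| = size s by rewrite /= card_imset; [exact: card_seq_sub | exact: phi_inj].
have pG : (p %| #|Group Ggrp|)%N by rewrite cG.
have [x /imsetP[a _ ->] ox] := Cauchy pp pG.
exists (val a); split; first exact: (hs _).1 (ssvalP a).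
split; first exact: prime_gt0.
split.
  have := phi_pow a #[phi a]%g e0; rewrite expg_order perm1 /= conv_eps_r // ox.
  by move=> <-.
move=> j j0 jp; apply/eqP => e.
have : (phi a ^+ j)%g = 1%g.
  apply/permP => t; rewrite perm1; apply: val_inj; by rewrite phi_pow e conv_eps_l.
move/eqP; rewrite -order_dvdn ox => /(dvdn_leq j0); by rewrite leqNgt jp.
Qed.

End Part1.

Unset Implicit Arguments. Set Strict Implicit.
Theorem mainTheorem14 (k : fieldType) (n : nat) (H : hopf_data k n) :
  is_hopf H ->
  (exists alpha, grouplike (hdual H) alpha /\ alpha != hone (hdual H)) ->
  (forall alpha, grouplike (hdual H) alpha -> central (hdual H) alpha ->
     alpha = hone (hdual H)) ->
  (forall g, grouplike H g -> central H g -> g = hone H) ->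
  (exists p : nat, prime p /\ odd p /\ dvd_card_grouplike (hdual H) p /\
     (forall g alpha, grouplike H g -> has_order H g p ->
        grouplike (hdual H) alpha -> has_order (hdual H) alpha p ->
        hpair alpha g != 1)) ->
  ~ (exists R : tensor2 k n, is_universal_R H R).
Proof.
move=> hH _ HcenD Hcen [p [pp [po [[s [us [hs pd]]] Hord]]]] [R [Rinv [A1 [A2 [A3 [A4 A5]]]]]].
have [a [ga oa]] := part1 hH us hs pp pd.
have [gg [og pa]] := part2 hH Hcen HcenD A1 A2 A3 A4 A5 pp po ga oa.
by move: (Hord _ _ gg og ga oa); rewrite pa eqxx.
Qed.
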